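(* For every integer $n\ge0$, as polynomials in $z$, $$\sum_{k=0}^n\binom nk^2\binom{-\imath z-\tfrac12+k}{n}=(-1)^n\,{}_3F_2\!\left(\begin{matrix}-n,\ n+1,\ \tfrac12-\imath z\\ 1,\ 1\end{matrix}\,\Big|\,1\right).$$ Equivalently, the polynomial $P_n(z)=\frac{\imath^n(n!)^3}{(2n)!}\sum_{k=0}^n\binom nk^2\binom{-\imath z-\frac12+k}{n}$ associated to $a_{n,k}=\binom{2n}{n}^{-1}\binom nk^2$ equals $\frac{(-\imath)^n(n!)^3}{(2n)!}\,{}_3F_2\!\left(\begin{smallmatrix}-n,\ n+1,\ \frac12-\imath z\\ 1,\ 1\end{smallmatrix}\big|1\right)$.
   Context: $\imath=\sqrt{-1}$. For complex $x$, $\binom{x}{n}=\frac{1}{n!}\prod_{\ell=0}^{n-1}(x-\ell)$; $(x)_k=x(x+1)\cdots(x+k-1)$. ${}_3F_2\!\left(\begin{smallmatrix}a_1,a_2,a_3\\ b_1,b_2\end{smallmatrix}\big|x\right)=\sum_{k\ge0}\frac{(a_1)_k(a_2)_k(a_3)_k}{(b_1)_k(b_2)_k}\frac{x^k}{k!}$ (terminating here since $a_1=-n$). *)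

(* Defs.v *)
From HB Require Import structures.
From mathcomp Require Import all_boot all_order all_algebra all_field.
Set Implicit Arguments. Unset Strict Implicit. Unset Printing Implicit Defensive.
Import Order.TTheory GRing.Theory Num.Theory.
Local Open Scope ring_scope.

Definition gbinom (R : fieldType) (x : R) (n : nat) : R :=
  (\prod_(l < n) (x - l%:R)) / (n`!)%:R.

Definition poch (R : pzRingType) (x : R) (k : nat) : R :=
  \prod_(i < k) (x + i%:R).

(* Terminating 3F2: sum of the hypergeometric series for k = 0..N.
   When a1 = -n (n a natural number) all terms with k > n vanish, so
   taking N = n gives the full (terminating) series. *)
Definition hyp3F2 (R : fieldType) (a1 a2 a3 b1 b2 x : R) (N : nat) : R :=
  \sum_(k < N.+1)
    (poch a1 k * poch a2 k * poch a3 k) / (poch b1 k * poch b2 k)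
    * x ^+ k / (k`!)%:R.

(* Main.v *)
Require Import Defs.
From HB Require Import structures.
From mathcomp Require Import all_boot all_order all_algebra all_field.
From mathcomp Require Import ring lra zify.
Import Order.TTheory GRing.Theory Num.Theory.
Local Open Scope ring_scope.

Lemma factR_neq0 k : (k`!)%:R != 0 :> algC.
Proof. by rewrite pnatr_eq0 -lt0n fact_gt0. Qed.

Lemma gbinomE (x : algC) n : gbinom x n * (n`!)%:R = \prod_(l < n) (x - l%:R).
Proof. by rewrite /gbinom mulfVK ?factR_neq0. Qed.

Lemma gbinom0 (x : algC) : gbinom x 0 = 1.
Proof. by rewrite /gbinom big_ord0 fact0 divr1. Qed.

Lemma gbinom_pascal (x : algC) n :
  gbinom (x + 1) n.+1 = gbinom x n.+1 + gbinom x n.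
Proof.
apply: (mulIf (factR_neq0 n.+1)).
rewrite mulrDl gbinomE gbinomE big_ord_recl big_ord_recr /=.
rewrite factS natrM mulrCA gbinomE.
rewrite (eq_bigr (fun i : 'I_n => x - i%:R)) => [|i _]; last first.
  by rewrite /bump /= add1n -addn1 natrD; ring.
rewrite subr0; ring.
Qed.
Lemma gbinom_nat k j : gbinom (k%:R : algC) j = 'C(k, j)%:R.
Proof.
elim: k j => [|k IH] [|j].
- by rewrite gbinom0.
- by rewrite /gbinom big_ord_recl subr0 mul0r mul0r bin0n.
- by rewrite gbinom0 bin0.
- by rewrite -addn1 natrD gbinom_pascal !IH addn1 binS natrD.
Qed.

Lemma gbinom_vdm (x : algC) k n :
  gbinom (x + k%:R) n = \sum_(j < n.+1) gbinom x j * 'C(k, n - j)%:R.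
Proof.
elim: k n => [|k IH] n.
  rewrite addr0 big_ord_recr /= subnn bin0 mulr1 big1 ?add0r // => j _.
  by rewrite bin0n subn_eq0 leqNgt ltn_ord mulr0.
case: n => [|n].
  by rewrite gbinom0 big_ord_recr big_ord0 /= gbinom0 bin0 mulr1 add0r.
rewrite -addn1 natrD addrA gbinom_pascal !IH.
rewrite [in RHS]big_ord_recr /= subnn bin0 [in LHS]big_ord_recr /= subnn bin0.
rewrite addrAC; congr (_ + _).
rewrite -big_split /=; apply: eq_bigr => j _.
have hj : (n.+1 - j = (n - j).+1)%N by rewrite subSn // -ltnS.
by rewrite hj addn1 binS natrD mulrDr.
Qed.

Lemma gbinom_vdm2 (x : algC) k N : (k <= N)%N ->
  gbinom (x + k%:R) k = \sum_(j < N.+1) gbinom x j * 'C(k, j)%:R.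
Proof.
move=> kN.
rewrite gbinom_vdm (big_ord_widen N.+1 (fun j => gbinom x j * 'C(k,k-j)%:R)) //.
rewrite big_mkcond; apply: eq_bigr => j _; case: ifP => hj.
  by rewrite bin_sub // -ltnS.
by rewrite bin_small ?mulr0 // ltnNge -ltnS hj.
Qed.

Lemma bin_mul_shift n i t :
  ('C(n, t + i) * 'C(t + i, i) = 'C(n, i) * 'C(n - i, t))%N.
Proof.
case: (leqP (t + i) n) => tin; last first.
  rewrite bin_small // mul0n.
  case: (leqP i n) => iN; last by rewrite bin_small.
  by rewrite (bin_small (n := n - i)) ?muln0 // ltn_subLR // addnC.
have iN : (i <= n)%N by apply: leq_trans tin; apply: leq_addl.
have tN : (t <= n - i)%N by rewrite leq_subRL // addnC.
have h1 := bin_fact (leq_addl t i); rewrite addnK in h1.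
have h2 : ('C(n, t + i) * ((t + i)`! * (n - i - t)`!))%N = n`!.
  by rewrite -subnDA [(i + t)%N]addnC bin_fact.
have h3 := bin_fact iN.
have h4 := bin_fact tN.
apply/eqP; rewrite -(eqn_pmul2r (_ : 0 < i`! * t`! * (n-i-t)`!)%N) ?muln_gt0 ?fact_gt0 //; apply/eqP.
transitivity ('C(n, t + i) * (('C(t + i, i) * (i`! * t`!)) * (n-i-t)`!))%N.
  by rewrite !mulnA.
rewrite h1 h2.
transitivity ('C(n, i) * (i`! * ('C(n - i, t) * (t`! * (n-i-t)`!))))%N; last first.
  by rewrite !mulnA [('C(n, i) * 'C(n - i, t) * i`!)%N]mulnAC.
by rewrite h4 h3.
Qed.

Lemma sum_shift (F : nat -> algC) N i : (i <= N)%N ->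
  (forall k, (k < i)%N -> F k = 0) ->
  \sum_(k < N.+1) F k = \sum_(t < (N - i).+1) F (t + i)%N.
Proof.
move=> iN F0.
rewrite -!(big_mkord xpredT) (big_cat_nat (n := i)) ?(leq_trans iN) //=.
rewrite big_nat_cond big1 ?add0r; last by move=> k /andP[/andP[_ hk] _]; apply: F0.
by rewrite -{1}(add0n i) big_addn subSn // big_mkord.
Qed.

Lemma coefL n j : (j <= n)%N ->
  \sum_(k < n.+1) ('C(n,k)%:R)^+2 * ('C(k, n-j)%:R : algC)
  = ('C(n,j) * 'C(n+j,n))%:R.
Proof.
move=> jn.
rewrite (@sum_shift (fun k => ('C(n,k)%:R)^+2 * ('C(k, n-j)%:R : algC)) n (n-j)%N) ?leq_subr //; last first.
  by move=> k hk; rewrite (bin_small hk) mulr0.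
rewrite subKn //.
transitivity (\sum_(t < j.+1) ('C(n,j) * ('C(j,t) * 'C(n, j - t)))%:R : algC).
  apply: eq_bigr => t _; rewrite -natrX -natrM; congr (_%:R).
  have ht := ltn_ord t.
  have e : (t + (n - j) = n - (j - t))%N by lia.
  rewrite -mulnn -mulnA bin_mul_shift subKn // bin_sub ?leq_subr // e bin_sub; last by lia.
  ring.
rewrite -natr_sum -big_distrr /= (binomial.Vandermonde j n j).
have e : 'C(n + j, n) = 'C(n + j, (n + j) - n) by rewrite bin_sub // leq_addr.
by rewrite [(j + n)%N]addnC e addKn.
Qed.

Lemma diff_step (f : nat -> algC) m :
  \sum_(t < m.+2) (-1)^+t * 'C(m.+1,t)%:R * f t
  = \sum_(t < m.+1) (-1)^+t * 'C(m,t)%:R * (f t - f t.+1).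
Proof.
have A : \sum_(t < m.+1) (-1)^+t * 'C(m,t)%:R * f t
   = f 0%N + \sum_(i < m.+1) (-1)^+i.+1 * 'C(m,i.+1)%:R * f i.+1.
  transitivity (\sum_(t < m.+2) (-1)^+t * 'C(m,t)%:R * f t).
    by rewrite [RHS]big_ord_recr /= bin_small // mulr0 mul0r addr0.
  by rewrite big_ord_recl /= expr0 bin0 !mul1r.
have B : \sum_(t < m.+1) (-1)^+t * 'C(m,t)%:R * (f t - f t.+1)
  = \sum_(t < m.+1) (-1)^+t * 'C(m,t)%:R * f t
    - \sum_(t < m.+1) (-1)^+t * 'C(m,t)%:R * f t.+1.
  by rewrite -sumrB; apply: eq_bigr => t _; rewrite mulrBr.
rewrite B A big_ord_recl /= expr0 bin0 !mul1r -addrA; congr (_ + _).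
rewrite -sumrB; apply: eq_bigr => i _.
rewrite binS natrD exprS; ring.
Qed.

Lemma diff_id m p N : (m <= p)%N ->
  \sum_(t < m.+1) (-1)^+t * 'C(m,t)%:R * ('C(N + t, p)%:R : algC)
  = (-1)^+m * 'C(N, p - m)%:R.
Proof.
elim: m p => [|m IH] p mp.
  by rewrite big_ord_recl big_ord0 /= addr0 addn0 subn0 expr0 bin0 !mul1r.
case: p mp => [//|p] mp.
rewrite (diff_step (fun t => 'C(N + t, p.+1)%:R)).
transitivity (- \sum_(t < m.+1) (-1)^+t * 'C(m,t)%:R * ('C(N + t, p)%:R : algC)).
  rewrite -sumrN; apply: eq_bigr => t _.
  rewrite addnS binS natrD; ring.
by rewrite IH // subSS exprS; ring.
Qed.

Lemma coefR n j : (j <= n)%N ->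
  \sum_(k < n.+1) (-1)^+k * 'C(n,k)%:R * 'C(n+k,k)%:R * ('C(k,j)%:R : algC)
  = (-1)^+n * ('C(n,j) * 'C(n+j,n))%:R.
Proof.
move=> jn.
rewrite (@sum_shift (fun k => (-1)^+k * 'C(n,k)%:R * 'C(n+k,k)%:R * ('C(k,j)%:R : algC)) n j) //; last first.
  by move=> k hk; rewrite (bin_small hk) mulr0.
transitivity ((-1)^+j * 'C(n,j)%:R *
  \sum_(t < (n - j).+1) (-1)^+t * 'C(n - j,t)%:R * ('C((n + j) + t, n)%:R : algC)).
  rewrite big_distrr /=; apply: eq_bigr => t _.
  have e : ('C(n + ((t:nat) + j), (t:nat) + j) = 'C(n + j + t, n))%N.
    have h : (n + (t + j) = n + j + t)%N by lia.
    have h2 : (t + j = (n + j + t) - n)%N by lia.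
    by rewrite h h2 bin_sub // -addnA leq_addr.
  have hR : 'C(n,t+j)%:R * 'C(t+j,j)%:R = 'C(n,j)%:R * 'C(n-j,t)%:R :> algC.
    by rewrite -!natrM bin_mul_shift.
  rewrite e exprD.
  transitivity ((-1)^+t * (-1)^+j * ('C(n, t + j)%:R * 'C(t + j, j)%:R) * 'C(n + j + t, n)%:R : algC); first ring.
  rewrite hR; ring.
rewrite (@diff_id (n - j) n (n + j)) ?leq_subr // subKn //.
have -> : (-1) ^+ n = (-1) ^+ j * (-1) ^+ (n - j) :> algC by rewrite -exprD subnKC.
have e : 'C(n + j, j) = 'C(n + j, n).
  by rewrite -{2}(addKn n j) bin_sub ?leq_addr.
by rewrite e natrM; ring.
Qed.

Lemma pochS (x : algC) k : poch x k.+1 = poch x k * (x + k%:R).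
Proof. by rewrite /poch big_ord_recr. Qed.

Lemma poch0 (x : algC) : poch x 0 = 1.
Proof. by rewrite /poch big_ord0. Qed.

Lemma poch1 k : poch (1 : algC) k = k`!%:R.
Proof.
elim: k => [|k IH]; first by rewrite poch0.
by rewrite pochS IH factS natrM -addn1 natrD; ring.
Qed.

Lemma pochN n k : (k <= n)%N ->
  poch (- n%:R : algC) k = (-1)^+k * ('C(n,k) * k`!)%:R.
Proof.
elim: k => [|k IH] kn; first by rewrite poch0 bin0 expr0 mul1r mul1n fact0.
rewrite pochS IH; last exact: ltnW.
rewrite !bin_ffact ffactnSr natrM natrB; last exact: ltnW.
rewrite exprS; ring.
Qed.

Lemma pochP n k : poch ((n.+1)%:R : algC) k * n`!%:R = (n + k)`!%:R.
Proof.
elim: k => [|k IH]; first by rewrite poch0 mul1r addn0.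
by rewrite pochS mulrAC IH addnS factS natrM -addn1 natrD -addnS natrD; ring.
Qed.

Lemma pochW (x : algC) k : poch (x + 1) k = gbinom (x + k%:R) k * k`!%:R.
Proof.
elim: k => [|k IH]; first by rewrite poch0 gbinom0 mul1r.
rewrite pochS IH !gbinomE big_ord_recl /= subr0.
rewrite [X in _ = _ * X](eq_bigr (fun i : 'I_k => (x + k%:R) - i%:R)) => [|i _]; last first.
  have -> : bump 0 i = i.+1 by [].
  rewrite !mulrS; ring.
rewrite mulrS; ring.
Qed.

Lemma term_eq (w : algC) n k : (k <= n)%N ->
  poch (- n%:R) k * poch (n.+1)%:R k * poch (w + 1) k / (poch 1 k * poch 1 k)
    * 1 ^+ k / (k`!)%:R
  = (-1)^+k * 'C(n,k)%:R * 'C(n+k,k)%:R * gbinom (w + k%:R) k.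
Proof.
move=> kn.
have hP : poch ((n.+1)%:R : algC) k = (n+k)`!%:R / n`!%:R.
  by rewrite -pochP mulfK ?factR_neq0.
have hC : 'C(n+k,k)%:R = (n+k)`!%:R / (k`!%:R * n`!%:R) :> algC.
  have h := bin_fact (leq_addl n k); rewrite addnK in h.
  by rewrite -h natrM natrM mulfK // mulf_neq0 ?factR_neq0.
rewrite pochN // poch1 pochW expr1n mulr1 natrM hP hC.
have h1 := factR_neq0 k; have h2 := factR_neq0 n.
by field; rewrite h1 h2.
Qed.

Theorem lemma5p9 (n : nat) (z : algC) :
  \sum_(k < n.+1) ('C(n, k)%:R) ^+ 2 * gbinom (- 'i * z - 2^-1 + k%:R) n
  = (-1) ^+ n * hyp3F2 (- n%:R) (n.+1)%:R (2^-1 - 'i * z) 1 1 1 n.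
Proof.
set w := - 'i * z - 2^-1.
have -> : 2^-1 - 'i * z = w + 1 by rewrite /w; field.
rewrite /hyp3F2.
transitivity (\sum_(j < n.+1) gbinom w j * ('C(n,j)*'C(n+j,n))%:R).
  under eq_bigr => k _ do rewrite gbinom_vdm big_distrr.
  rewrite exchange_big /=; apply: eq_bigr => j _.
  have jn : (j <= n)%N by rewrite -ltnS; exact: ltn_ord.
  rewrite -(@coefL n j jn) big_distrr /=; apply: eq_bigr => k _; ring.
transitivity ((-1)^+n * \sum_(k < n.+1) \sum_(j < n.+1)
   (-1)^+k * 'C(n,k)%:R * 'C(n+k,k)%:R * (gbinom w j * 'C(k,j)%:R)); last first.
  congr (_ * _); apply: eq_bigr => k _.
  have kn : (k <= n)%N by rewrite -ltnS; exact: ltn_ord.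
  rewrite (@term_eq w n k kn) (@gbinom_vdm2 w k n kn) big_distrr /=; done.
rewrite exchange_big /= big_distrr /=; apply: eq_bigr => j _.
have jn : (j <= n)%N by rewrite -ltnS; exact: ltn_ord.
transitivity ((-1)^+n * (gbinom w j * \sum_(k < n.+1)
   (-1)^+k * 'C(n,k)%:R * 'C(n+k,k)%:R * ('C(k,j)%:R : algC))); last first.
  congr (_ * _); rewrite big_distrr /=; apply: eq_bigr => k _; ring.
rewrite (@coefR n j jn).
have e : (-1)^+n * (-1)^+n = 1 :> algC by rewrite -expr2 sqrr_sign.
transitivity ((-1)^+n * (-1)^+n * (gbinom w j * ('C(n, j) * 'C(n + j, n))%:R)).
  by rewrite e mul1r.
ring.
Qed.
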